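(* Let $1\le s\le n$, let $\mathbf{D}=[\mathbf{d}_1,\dots,\mathbf{d}_n]\in\mathbb{R}^{d\times n}$ be any matrix with $\max\{\|\mathbf{d}_i\|_2^2: i\in[n]\}\le\rho$, and let $\mathbf{g}\sim N(\mathbf{0},\mathbf{I}_d)$. Then \[ \mathbb{E}\sqrt{\frac1s\sum_{\ell=1}^s\big((\mathbf{D}^\top\mathbf{g})^*_\ell\big)^2}\ \le\ \sqrt{4\rho\log(\sqrt2\,n/s)}. \]
   Context: For $\mathbf{x}\in\mathbb{R}^n$, the nonincreasing rearrangement $\mathbf{x}^*$ satisfies $x_1^*\ge\dots\ge x_n^*\ge0$ with $x_i^*=|x_{\pi(i)}|$ for some permutation $\pi$. *)

(* Defs.v *)
From HB Require Import structures.
From mathcomp Require Import all_boot all_order all_algebra.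
From mathcomp Require Import all_classical all_reals all_analysis.
Set Implicit Arguments. Unset Strict Implicit. Unset Printing Implicit Defensive.
Import Order.TTheory GRing.Theory Num.Theory.
Local Open Scope ring_scope.

(* Expectation E[f(g)] for g ~ N(0, I_d), g represented as a row vector of
   size d, for f nonnegative (extended-real valued).  Since the coordinates of
   g are i.i.d. standard normal, this is the iterated integral against the
   standard normal probability measure normal_prob 0 1 (Tonelli). *)
Fixpoint gauss_expect {R : realType} (d : nat) : ('rV[R]_d -> \bar R) -> \bar R :=
  match d return ('rV[R]_d -> \bar R) -> \bar R with
  | 0 => fun f => f 0
  | d'.+1 => fun f =>
      (\int[normal_prob (0:R) 1]_x
         gauss_expect (fun v : 'rV[R]_d' => f (row_mx (\row_(j < 1) x) v)))%E
  end.

(* Nonincreasing rearrangement x^* (star) of x in R^n : the sorted list of |x_i|,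
   in nonincreasing order; the l-th entry of x^* (1-indexed) is nth 0 (rearr x) (l-1). *)
Definition rearr {R : realType} (n : nat) (x : 'rV[R]_n) : seq R :=
  path.sort (fun a b : R => (b <= a)%R) (map (fun i : 'I_n => `|x 0 i|) (enum 'I_n)).

(* Main.v *)
Require Import Defs.
From HB Require Import structures.
From mathcomp Require Import all_boot all_order all_algebra.
From mathcomp Require Import all_classical all_reals all_analysis.
From mathcomp Require Import measurable_realfun normal_distribution charge.
From mathcomp Require Import ring lra.
Import Order.TTheory GRing.Theory Num.Theory.
Local Open Scope ring_scope.
Section S0.
Local Open Scope ereal_scope.
Context {R : realType}.

Lemma ge0_le_integral_nm d (T : measurableType d) (mu : {measure set T -> \bar R})
  (f1 f2 : T -> \bar R) :
  (forall x, 0 <= f1 x) -> (forall x, f1 x <= f2 x) ->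
  \int[mu]_x f1 x <= \int[mu]_x f2 x.
Proof.
move=> f10 f12.
have f20 : forall x, 0 <= f2 x by move=> x; exact: le_trans (f10 x) (f12 x).
rewrite !ge0_integralTE//.
apply: ereal_sup_le => _ [h hf1 <-]; exists h => //= x.
exact: le_trans (hf1 x) (f12 x).
Qed.

Lemma int_normal01 (h : R -> \bar R) : (forall x, 0 <= h x) ->
  measurable_fun [set: R] h ->
  \int[normal_prob 0 1]_x h x =
  \int[lebesgue_measure]_x (h x * (normal_pdf 0 1 x)%:E).
Proof.
move=> h0 mh.
have dom := @normal_prob_dominates R 0 1.
rewrite -(Radon_Nikodym_SigmaFinite.change_of_variables dom) //.
apply: ae_eq_integral => //.
- apply: emeasurable_funM => //.
  exact: measurable_int (Radon_Nikodym_SigmaFinite.f_integrable dom).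
- apply: emeasurable_funM => //.
  by apply/measurable_EFinP; exact: measurable_normal_pdf.
apply: ae_eqe_mul2l.
apply: integral_ae_eq => //.
- exact: Radon_Nikodym_SigmaFinite.f_integrable.
- by apply/measurable_EFinP; exact: measurable_normal_pdf.
move=> E _ mE.
by rewrite -Radon_Nikodym_SigmaFinite.f_integral.
Qed.
End S0.
Section S.
Context {R : realType}.
Lemma pdf_shift (mu b c x : R) : 0 <= mu -> 0 < 1 - 2 * mu * b ^+ 2 ->
  expR (mu * (c + x * b) ^+ 2) * normal_pdf 0 1 x =
  (Num.sqrt (1 - 2 * mu * b ^+ 2))^-1 * expR (mu / (1 - 2 * mu * b ^+ 2) * c ^+ 2) *
  normal_pdf (2 * mu * b * c / (1 - 2 * mu * b ^+ 2)) (Num.sqrt (1 - 2 * mu * b ^+ 2))^-1 x.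
Proof.
move=> mu0; set al := 1 - 2 * mu * b ^+ 2 => al0.
have sa0 : 0 < Num.sqrt al by rewrite sqrtr_gt0.
rewrite /normal_pdf oner_eq0 invr_eq0 gt_eqF //.
rewrite /normal_peak /normal_fun exprVn sqr_sqrtr ?ltW // expr1n mul1r.
rewrite -mulrnAr sqrtrM ?invr_ge0 ?ltW // sqrtrV ?ltW //.
have sP0 : 0 < Num.sqrt (pi *+ 2 : R) by rewrite sqrtr_gt0 mulrn_wgt0 // pi_gt0.
set sP := Num.sqrt (pi *+ 2). set sa := Num.sqrt al.
have key : expR (mu * (c + x * b) ^+ 2) * expR (- (x - 0) ^+ 2 / 2) =
  expR (mu / al * c ^+ 2) * expR (- (x - 2 * mu * b * c / al) ^+ 2 / (al^-1 *+ 2)).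
  rewrite -!expRD; congr expR; rewrite /al; field.
  by rewrite -/al gt_eqF.
have -> : expR (mu * (c + x * b) ^+ 2) * (sP^-1 * expR (- (x - 0) ^+ 2 / 2)) =
  sP^-1 * (expR (mu * (c + x * b) ^+ 2) * expR (- (x - 0) ^+ 2 / 2)) by rewrite mulrCA.
rewrite key; field.
by rewrite !gt_eqF.
Qed.
End S.
Section S2.
Context {R : realType}.
Local Notation mu := (@lebesgue_measure R).

Lemma meas_phi n (A : R) (K m b c : 'I_n -> R) :
  measurable_fun [set: R] (fun x => A + \sum_i K i * expR (m i * (c i + x * b i) ^+ 2)).
Proof.
apply: measurable_funD => //; apply: measurable_sum => i.
apply: measurable_funM => //; apply: measurableT_comp; first exact: measurable_expR.
apply: measurable_funM => //; apply: measurable_funX.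
apply: measurable_funD => //; apply: measurable_funM => //.
Qed.

Lemma int_gauss1 n (A : R) (K m b c : 'I_n -> R) :
  (forall i, 0 <= m i) -> (forall i, 0 < 1 - 2 * m i * b i ^+ 2) ->
  (forall x, 0 <= A + \sum_i K i * expR (m i * (c i + x * b i) ^+ 2)) ->
  (\int[normal_prob 0 1]_x (A + \sum_i K i * expR (m i * (c i + x * b i) ^+ 2))%:E =
  (A + \sum_i K i * ((Num.sqrt (1 - 2 * m i * b i ^+ 2))^-1 *
      expR (m i / (1 - 2 * m i * b i ^+ 2) * c i ^+ 2)))%:E)%E.
Proof.
move=> m0 al0 phi0.
rewrite int_normal01; last 2 first.
- by move=> x; rewrite lee_fin.
- by apply/measurable_EFinP; exact: meas_phi.
under eq_integral => x _.
  rewrite -EFinM mulrDl big_distrl /=.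
  under eq_bigr => i _ do rewrite -mulrA pdf_shift // mulrA.
  rewrite EFinD EFinM -sumEFin.
  under eq_bigr => i _ do rewrite EFinM.
  over.
rewrite /= integralD //=; last 2 first.
- by apply: integrableZl => //; exact: integrable_normal_pdf.
- apply: integrable_sum => // i _.
  by apply: integrableZl => //; exact: integrable_normal_pdf.
rewrite integral_sum //; last first.
  move=> i; by apply: integrableZl => //; exact: integrable_normal_pdf.
have HZ : forall r mm ss, (\int[mu]_x (r%:E * (normal_pdf mm ss x)%:E) = r%:E)%E.
  move=> r mm ss; rewrite integralZl //; last exact: integrable_normal_pdf.
  by rewrite integral_normal_pdf mule1.
rewrite HZ.
erewrite eq_bigr; last by move=> i _; exact: HZ.
by rewrite sumEFin -EFinD.
Qed.
End S2.
Section RM.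
Context {R : realType}.
Lemma row_mx_0 d (x : R) (v : 'rV[R]_d) :
  (row_mx (\row_(j < 1) x) v : 'rV_d.+1) 0 ord0 = x.
Proof. by rewrite mxE; case: splitP => k /=; rewrite ?mxE // => /eqP. Qed.
Lemma row_mx_S d (x : R) (v : 'rV[R]_d) j :
  (row_mx (\row_(j < 1) x) v : 'rV_d.+1) 0 (lift ord0 j) = v 0 j.
Proof.
rewrite mxE; case: splitP => k /=.
  by rewrite /bump /= => hk; have := ltn_ord k; rewrite -hk.
by rewrite /bump /= add1n => /eqP; rewrite eqSS => /eqP/val_inj ->.
Qed.
End RM.
Section S3.
Context {R : realType}.

Lemma gauss_expect_ge0 d (f : 'rV[R]_d -> \bar R) :
  (forall g, 0 <= f g)%E -> (0 <= gauss_expect f)%E.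
Proof.
elim: d f => [|d IH] f f0 /=; first exact: f0.
by apply: integral_ge0 => x _; apply: IH.
Qed.

Lemma gauss_main n d : forall (f : 'rV[R]_d -> \bar R) (A : R) (lam B c : 'I_n -> R)
  (a : 'I_n -> 'I_d -> R),
  (forall i, 0 <= lam i) -> (forall i, 0 < 1 - 2 * lam i * \sum_j a i j ^+ 2) ->
  (forall g, 0 <= f g)%E ->
  (forall g, f g <= (A + \sum_i B i * expR (lam i * (c i + \sum_j g 0 j * a i j) ^+ 2))%:E)%E ->
  (gauss_expect f <= (A + \sum_i B i * ((Num.sqrt (1 - 2 * lam i * \sum_j a i j ^+ 2))^-1 *
     expR (lam i / (1 - 2 * lam i * \sum_j a i j ^+ 2) * c i ^+ 2)))%:E)%E.
Proof.
elim: d => [|d IH] f A lam B c a l0 q1 f0 fle /=.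
  apply: le_trans (fle 0) _; rewrite lee_fin lerD2l; apply: ler_sum => i _.
  by rewrite !big_ord0 addr0 mulr0 subr0 sqrtr1 invr1 mul1r mulr1.
set beta := fun i => 1 - 2 * lam i * \sum_(j < d) a i (lift ord0 j) ^+ 2.
have qS : forall i, \sum_(j < d.+1) a i j ^+ 2 =
    a i ord0 ^+ 2 + \sum_(j < d) a i (lift ord0 j) ^+ 2.
  by move=> i; rewrite big_ord_recl.
have b0 : forall i, 0 < beta i.
  move=> i; apply: lt_le_trans (q1 i) _; rewrite /beta qS.
  have h : 0 <= lam i * a i ord0 ^+ 2 by rewrite mulr_ge0 // sqr_ge0.
  lra.
set phi := fun x => A + \sum_i (B i * (Num.sqrt (beta i))^-1) *
   expR (lam i / beta i * (c i + x * a i ord0) ^+ 2).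
have inner : forall x, (gauss_expect (fun v : 'rV[R]_d => f (row_mx (\row_(j < 1) x) v))
     <= (phi x)%:E)%E.
  move=> x.
  have := IH (fun v => f (row_mx (\row_(j < 1) x) v)) A lam B
    (fun i => c i + x * a i ord0) (fun i j => a i (lift ord0 j)) l0 b0 (fun v => f0 _).
  move=> H; apply: le_trans (H _) _.
    move=> v; apply: le_trans (fle _) _; rewrite lee_fin lerD2l; apply: ler_sum => i _.
    rewrite big_ord_recl addrA.
    rewrite row_mx_0; under eq_bigr => j _ do rewrite row_mx_S.
    by [].
  by rewrite lee_fin lerD2l; apply: ler_sum => i _; rewrite mulrA.
apply: (@le_trans _ _ (\int[normal_prob 0 1]_x (phi x)%:E)%E).
  apply: ge0_le_integral_nm => x; last exact: inner.
  by apply: gauss_expect_ge0 => v; apply: f0.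
rewrite /phi int_gauss1; first last.
- move=> x.
  have h1 : (0 <= gauss_expect (fun v : 'rV[R]_d => f (row_mx (\row_(j < 1) x) v)))%E.
    by apply: gauss_expect_ge0 => v; apply: f0.
  have := le_trans h1 (inner x).
  by rewrite lee_fin.
- move=> i; have -> : 1 - 2 * (lam i / beta i) * a i ord0 ^+ 2 =
      (1 - 2 * lam i * \sum_j a i j ^+ 2) / beta i.
    by rewrite qS /beta; field; rewrite -/(beta i) gt_eqF.
  by rewrite divr_gt0.
- by move=> i; rewrite divr_ge0 // ltW.
rewrite lee_fin lerD2l; apply: ler_sum => i _.
have -> : 1 - 2 * (lam i / beta i) * a i ord0 ^+ 2 =
      (1 - 2 * lam i * \sum_j a i j ^+ 2) / beta i.
  by rewrite qS /beta; field; rewrite -/(beta i) gt_eqF.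
have hb := b0 i; have hq := q1 i.
rewrite sqrtrM; last exact: ltW.
rewrite sqrtrV; last exact: ltW.
have -> : lam i / beta i / ((1 - 2 * lam i * \sum_j a i j ^+ 2) / beta i) =
   lam i / (1 - 2 * lam i * \sum_j a i j ^+ 2).
  by field; rewrite !gt_eqF.
rewrite le_eqVlt; apply/orP; left; apply/eqP.
have s1 : Num.sqrt (beta i) != 0 by rewrite gt_eqF // sqrtr_gt0.
have s2 : Num.sqrt (1 - 2 * lam i * \sum_j a i j ^+ 2) != 0 by rewrite gt_eqF // sqrtr_gt0.
by rewrite invf_div !mulrA divfK.
Qed.
End S3.
Section RR.
Context {R : realType}.
Lemma size_rearr n (x : 'rV[R]_n) : size (rearr x) = n.
Proof. by rewrite /rearr size_sort size_map size_enum_ord. Qed.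

Lemma rearr_sum_le n s (x : 'rV[R]_n) (F : R -> R) : (s <= n)%N ->
  (forall z, 0 <= F z) ->
  \sum_(l < s) F (nth 0 (rearr x) l) <= \sum_(i < n) F `|x 0 i|.
Proof.
move=> sn F0.
have -> : \sum_(i < n) F `|x 0 i| = \sum_(z <- rearr x) F z.
  rewrite /rearr (perm_big _ (permEl (perm_sort _ _))) /= big_map.
  by rewrite big_enum /=.
rewrite (big_nth 0) size_rearr /= -(big_mkord xpredT (fun l => F (nth 0 (rearr x) l))).
rewrite (big_cat_nat (leq0n s) sn) /=.
by rewrite lerDl sumr_ge0.
Qed.
End RR.
Section Arith.
Context {R : realType}.
Lemma amgm_le (Y t : R) : 0 <= Y -> 0 < t ->
  Num.sqrt Y <= (Y + t) / (2 * Num.sqrt t).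
Proof.
move=> Y0 t0; have st0 : 0 < Num.sqrt t by rewrite sqrtr_gt0.
rewrite ler_pdivlMr ?mulr_gt0 //.
have := sqr_ge0 (Num.sqrt Y - Num.sqrt t).
rewrite sqrrB (sqr_sqrtr Y0) (sqr_sqrtr (ltW t0)).
move: (Num.sqrt Y) (Num.sqrt t) => a b; rewrite mulr2n; lra.
Qed.

Lemma exp_tangent (rho M z : R) : 0 < rho -> 0 < M ->
  z ^+ 2 <= 4 * rho * (ln M - 1) + 4 * rho / M * expR ((4 * rho)^-1 * z ^+ 2).
Proof.
move=> rp M0; have := expR_ge1Dx ((4 * rho)^-1 * z ^+ 2 - ln M).
rewrite expRB lnK ?posrE // => h.
rewrite [X in X <= _](_ : z ^+ 2 = 4 * rho * ((4 * rho)^-1 * z ^+ 2)); last first.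
  by field; rewrite gt_eqF.
move: ((4 * rho)^-1 * z ^+ 2) h => u.
have -> : 4 * rho / M * expR u = 4 * rho * (expR u / M) by rewrite mulrAC -mulrA.
move: (expR u / M) (ln M) => w l h; nra.
Qed.
End Arith.
Section Arith2.
Context {R : realType}.
Lemma inv_sqrt_le (q rho : R) : 0 < rho -> 0 <= q -> q <= rho ->
  (Num.sqrt (1 - 2 * (4 * rho)^-1 * q))^-1 <= Num.sqrt 2.
Proof.
move=> rp q0 qr.
have -> : 1 - 2 * (4 * rho)^-1 * q = (2 * rho - q) / (2 * rho).
  by field; rewrite gt_eqF.
have h1 : 0 < 2 * rho - q by lra.
rewrite -sqrtrV; last by rewrite divr_ge0 ?ltW // mulr_gt0.
rewrite ler_sqrt ?ltr0n // invf_div ler_pdivrMr //; lra.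
Qed.
End Arith2.
Theorem lemma4p7 (R : realType) (d n s : nat) (D : 'M[R]_(d, n)) (rho : R) :
  (1 <= s)%N -> (s <= n)%N ->
  (forall i : 'I_n, \sum_(j < d) (D j i) ^+ 2 <= rho) ->
  (gauss_expect (fun g : 'rV[R]_d =>
     (Num.sqrt (s%:R^-1 * \sum_(l < s) (nth 0 (rearr (g *m D)) l) ^+ 2))%:E)
   <= (Num.sqrt (4 * rho * ln (Num.sqrt 2 * n%:R / s%:R)))%:E)%E.
Proof.
move=> s1 sn hD.
have n1 : (0 < n)%N by apply: leq_trans sn.
have rho0 : 0 <= rho.
  apply: le_trans (hD (Ordinal n1)); apply: sumr_ge0 => j _; exact: sqr_ge0.
have s0 : 0 < s%:R :> R by rewrite ltr0n.
have n0 : 0 < n%:R :> R by rewrite ltr0n.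
have Y0 : forall g : 'rV[R]_d,
    0 <= s%:R^-1 * \sum_(l < s) (nth 0 (rearr (g *m D)) l) ^+ 2.
  by move=> g; rewrite mulr_ge0 ?invr_ge0 ?ler0n // sumr_ge0 // => l _; rewrite sqr_ge0.
have [rE|rhop] := eqVneq rho 0.
  subst rho.
  have D0 : forall j i, D j i = 0.
    move=> j i; apply/eqP; rewrite -sqrf_eq0 eq_le sqr_ge0 andbT.
    apply: le_trans _ (hD i); rewrite (bigD1 j) //= lerDl sumr_ge0 // => k _.
    exact: sqr_ge0.
  have := @gauss_main R n d (fun g : 'rV[R]_d =>
     (Num.sqrt (s%:R^-1 * \sum_(l < s) (nth 0 (rearr (g *m D)) l) ^+ 2))%:E)
     0 (fun _ => 0) (fun _ => 0) (fun _ => 0) (fun i j => D j i).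
  move=> H; apply: le_trans (H _ _ _ _) _.
  - by [].
  - by move=> i; rewrite mulr0 mul0r subr0 ltr01.
  - by move=> g; rewrite lee_fin sqrtr_ge0.
  - move=> g; rewrite lee_fin [X in _ <= X](_ : _ = 0); last first.
      by rewrite big1 ?addr0 // => i _ /=; rewrite mul0r.
    have S0 : \sum_(l < s) (nth 0 (rearr (g *m D)) l) ^+ 2 = 0.
      apply/eqP; rewrite eq_le; apply/andP; split; last by apply: sumr_ge0 => l _; exact: sqr_ge0.
      apply: le_trans (@rearr_sum_le R _ _ (g *m D) (fun z => z ^+ 2) sn (fun z => sqr_ge0 z)) _.
      rewrite le_eqVlt; apply/orP; left; apply/eqP; apply: big1 => i _.
      rewrite mxE big1 ?normr0 ?expr0n // => j _.
      by rewrite D0 mulr0.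
    by rewrite S0 mulr0 sqrtr0.
  rewrite big1 ?addr0; last by move=> i _ /=; rewrite mul0r.
  by rewrite mulr0 mul0r sqrtr0.

have rp : 0 < rho by rewrite lt_def rhop rho0.
have sq2 : 1 < Num.sqrt 2 :> R.
  by rewrite -{1}sqrtr1 ltr_sqrt ?ltr0n // ltr1n.
have ns1 : 1 <= n%:R / s%:R :> R by rewrite ler_pdivlMr // mul1r ler_nat.
set M := Num.sqrt 2 * n%:R / s%:R.
have M1 : 1 < M by rewrite /M -mulrA; nra.
have M0 : 0 < M by apply: lt_trans M1.
set L := ln M.
have L0 : 0 < L by rewrite ln_gt0.
set t := 4 * rho * L.
have t0 : 0 < t by rewrite /t !mulr_gt0.
set st := Num.sqrt t.
have st0 : 0 < st by rewrite sqrtr_gt0.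
have key : 4 * rho * L = st * st by rewrite -expr2 sqr_sqrtr ?ltW.
set lam := (4 * rho)^-1.
have lam0 : 0 < lam by rewrite invr_gt0 mulr_gt0.
set A := (4 * rho * (L - 1) + t) / (2 * st).
set Bc := 4 * rho / (2 * M * s%:R * st).
have ME : M = Num.sqrt 2 * n%:R / s%:R by [].
have LE : L = ln M by [].
have tE : t = 4 * rho * L by [].
have stE : st = Num.sqrt t by [].
have lamE : lam = (4 * rho)^-1 by [].
have AE : A = (4 * rho * (L - 1) + t) / (2 * st) by [].
have BcE : Bc = 4 * rho / (2 * M * s%:R * st) by [].
clearbody Bc A lam st t L M.
have Bc0 : 0 <= Bc by rewrite BcE divr_ge0 ?mulr_ge0 // ltW.
have q1 : forall i, 0 < 1 - 2 * lam * \sum_j D j i ^+ 2.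
  move=> i; have hq := hD i.
  have hq0 : 0 <= \sum_j D j i ^+ 2 by apply: sumr_ge0 => j _; exact: sqr_ge0.
  have -> : 2 * lam * \sum_j D j i ^+ 2 = (\sum_j D j i ^+ 2) / (2 * rho).
    by rewrite lamE; field; rewrite gt_eqF.
  rewrite subr_gt0 ltr_pdivrMr ?mulr_gt0 //; lra.
have := @gauss_main R n d (fun g : 'rV[R]_d =>
     (Num.sqrt (s%:R^-1 * \sum_(l < s) (nth 0 (rearr (g *m D)) l) ^+ 2))%:E)
     A (fun _ => lam) (fun _ => Bc) (fun _ => 0) (fun i j => D j i).
move=> H; apply: le_trans (H _ q1 _ _) _.
- by move=> i; exact: ltW.
- by move=> g; rewrite lee_fin sqrtr_ge0.
- move=> g; rewrite lee_fin.
  set Y := s%:R^-1 * _.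
  have e_x : forall i, \sum_j g 0 j * D j i = (g *m D) 0 i by move=> i; rewrite mxE.
  under eq_bigr => i _ do rewrite /= add0r e_x.
  rewrite -big_distrr /=.
  set S := \sum_(i < n) expR (lam * (g *m D) 0 i ^+ 2).
  have step1 : Num.sqrt Y <= (Y + t) / (2 * st).
    by rewrite stE; apply: amgm_le => //; exact: Y0.
  have step2 : forall z, z ^+ 2 <= 4 * rho * (L - 1) + 4 * rho / M * expR (lam * z ^+ 2).
    by move=> z; rewrite LE lamE; exact: exp_tangent.
  have step3 : Y <= 4 * rho * (L - 1) + 4 * rho / (M * s%:R) * S.
    have h1 : \sum_(l < s) (nth 0 (rearr (g *m D)) l) ^+ 2 <=
        \sum_(l < s) (4 * rho * (L - 1) + 4 * rho / M * expR (lam * (nth 0 (rearr (g *m D)) l) ^+ 2)).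
      by apply: ler_sum => l _; exact: step2.
    rewrite big_split /= sumr_const card_ord -big_distrr /= in h1.
    have h2 : \sum_(l < s) expR (lam * (nth 0 (rearr (g *m D)) l) ^+ 2) <= S.
      apply: le_trans (@rearr_sum_le R _ _ (g *m D) (fun z => expR (lam * z ^+ 2)) sn
        (fun z => expR_ge0 _)) _.
      by apply: ler_sum => i _; rewrite real_normK ?num_real.
    have h3 : 0 <= 4 * rho / M by rewrite divr_ge0 ?mulr_ge0 // ltW.
    have h4 := ler_wpM2l h3 h2.
    have h5 : \sum_(l < s) (nth 0 (rearr (g *m D)) l) ^+ 2 <=
        4 * rho * (L - 1) *+ s + 4 * rho / M * S.
      by apply: le_trans h1 _; rewrite lerD2l.
    have h6 : 0 <= s%:R^-1 :> R by rewrite invr_ge0 ler0n.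
    rewrite /Y; apply: le_trans (ler_wpM2l h6 h5) _.
    rewrite le_eqVlt; apply/orP; left; apply/eqP.
    rewrite -mulr_natr; field; rewrite !gt_eqF //.
  apply: le_trans step1 _.
  rewrite AE BcE.
  have : (Y + t) / (2 * st) <= (4 * rho * (L - 1) + 4 * rho / (M * s%:R) * S + t) / (2 * st).
    by rewrite ler_pM2r ?invr_gt0 ?mulr_gt0 // lerD2r.
  move/le_trans; apply.
  rewrite le_eqVlt; apply/orP; left; apply/eqP.
  field; rewrite !gt_eqF //.
rewrite lee_fin.
under eq_bigr => i _ do rewrite /= expr0n /= mulr0 expR0 mulr1.
apply: (@le_trans _ _ (A + \sum_(i < n) Bc * Num.sqrt 2)).
  rewrite lerD2l; apply: ler_sum => i _; apply: ler_wpM2l => //.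
  rewrite lamE; apply: inv_sqrt_le => //.
  by apply: sumr_ge0 => j _; exact: sqr_ge0.
rewrite sumr_const card_ord -[_ *+ n]mulr_natr le_eqVlt; apply/orP; left; apply/eqP.
have Ms : M * s%:R = Num.sqrt 2 * n%:R.
  by rewrite ME; field; rewrite gt_eqF.
have sq0 : Num.sqrt 2 != 0 :> R by rewrite gt_eqF // (lt_trans _ sq2).
transitivity ((4 * rho * L) / st); last by rewrite key mulfK // gt_eqF.
rewrite AE BcE tE ME.
field; rewrite !gt_eqF //.
Qed.
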